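(* Let $M^2$ be a strongly regular minimal surface of general type in $\mathbb R^4$, parameterized by semi-canonical parameters $(u,v)$, with invariants $\mu,\nu$. Then the function $E\sqrt{|\mu^2-\nu^2|}$ does not depend on $v$, and the function $G\sqrt{|\mu^2-\nu^2|}$ does not depend on $u$.
   Context: $\mathbb R^4$ carries the standard metric $g=\langle\cdot,\cdot\rangle$ and flat connection $\nabla'$; everything is smooth and local. For a regular surface $M^2: z=z(u,v)$ let $E,F,G$ be the first fundamental form coefficients, $\sigma$ the second fundamental form, $K$ the Gauss curvature, and $\varkappa$ the curvature of the normal connection, $\varkappa=g(R^\perp(x,y)n_2,n_1)$ for a positively oriented orthonormal frame $(x,y,n_1,n_2)$ with $x,y$ tangent. Minimal means $\sigma(x,x)+\sigma(y,y)=0$ for orthonormal tangent $x,y$. A minimal surface is of general type if $K^2-\varkappa^2>0$ and $\varkappa\neq0$ everywhere. The ellipse of curvature at $p$ is $\{\sigma(v,v): v\in T_pM^2,\ |v|=1\}$; a tangent line is canonical if it is collinear with an axis of this ellipse. The geometric frame is a positively oriented orthonormal frame $\{x,y,n_1,n_2\}$ with $x,y$ canonical tangent fields and $n_1,n_2$ normal, satisfying $\nabla'_xx=\gamma_1y+\nu n_1$, $\nabla'_xy=-\gamma_1x+\mu n_2$, $\nabla'_yx=-\gamma_2y+\mu n_2$, $\nabla'_yy=\gamma_2x-\nu n_1$, $\nabla'_xn_1=-\nu x+\beta_1n_2$, $\nabla'_yn_1=\nu y+\beta_2n_2$, $\nabla'_xn_2=-\mu y-\beta_1n_1$, $\nabla'_yn_2=-\mu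 x-\beta_2n_1$, with $\mu>0$, $\nu\ne0$, $\mu^2\ne\nu^2$; the functions $\nu,\mu,\gamma_1,\gamma_2,\beta_1,\beta_2$ are the invariants of $M^2$. Parameters $(u,v)$ are semi-canonical if the parametric lines are integral curves of the canonical tangents, with $F=0$, $x=z_u/\sqrt E$, $y=z_v/\sqrt G$; then $\gamma_1=-y(\ln\sqrt E)$, $\gamma_2=-x(\ln\sqrt G)$. A minimal surface of general type is strongly regular if $\gamma_1\gamma_2\neq0$ everywhere. *)

(* Defs.v *)
From Stdlib Require Import Reals.
Open Scope R_scope.

Record R4 := mkR4 { c1 : R; c2 : R; c3 : R; c4 : R }.

Definition vadd (a b : R4) : R4 :=
  mkR4 (c1 a + c1 b) (c2 a + c2 b) (c3 a + c3 b) (c4 a + c4 b).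
Definition vscale (r : R) (a : R4) : R4 :=
  mkR4 (r * c1 a) (r * c2 a) (r * c3 a) (r * c4 a).
Definition vopp (a : R4) : R4 := vscale (-1) a.
Definition dot (a b : R4) : R :=
  c1 a * c1 b + c2 a * c2 b + c3 a * c3 b + c4 a * c4 b.

Definition det3 (a1 a2 a3 b1 b2 b3 d1 d2 d3 : R) : R :=
  a1 * (b2 * d3 - b3 * d2) - a2 * (b1 * d3 - b3 * d1) + a3 * (b1 * d2 - b2 * d1).

Definition det4 (a b c d : R4) : R :=
    c1 a * det3 (c2 b) (c3 b) (c4 b) (c2 c) (c3 c) (c4 c) (c2 d) (c3 d) (c4 d)
  - c2 a * det3 (c1 b) (c3 b) (c4 b) (c1 c) (c3 c) (c4 c) (c1 d) (c3 d) (c4 d)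
  + c3 a * det3 (c1 b) (c2 b) (c4 b) (c1 c) (c2 c) (c4 c) (c1 d) (c2 d) (c4 d)
  - c4 a * det3 (c1 b) (c2 b) (c3 b) (c1 c) (c2 c) (c3 c) (c1 d) (c2 d) (c3 d).

Definition domain := R -> R -> Prop.

Definition open_dom (U : domain) : Prop :=
  forall u v, U u v -> exists r, r > 0 /\
    forall u' v', Rabs (u' - u) < r -> Rabs (v' - v) < r -> U u' v'.

Definition pd_u (U : domain) (f g : R -> R -> R) : Prop :=
  forall u v, U u v -> derivable_pt_lim (fun t => f t v) u (g u v).
Definition pd_v (U : domain) (f g : R -> R -> R) : Prop :=
  forall u v, U u v -> derivable_pt_lim (fun t => f u t) v (g u v).

Definition cont2 (U : domain) (f : R -> R -> R) : Prop :=
  forall u v, U u v -> forall eps, eps > 0 -> exists delta, delta > 0 /\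
    forall u' v', Rabs (u' - u) < delta -> Rabs (v' - v) < delta ->
      Rabs (f u' v' - f u v) < eps.

Fixpoint Ck (k : nat) (U : domain) (f : R -> R -> R) : Prop :=
  match k with
  | O => cont2 U f
  | S k' => exists fu fv, pd_u U f fu /\ pd_v U f fv /\ Ck k' U fu /\ Ck k' U fv
  end.

Definition smooth (U : domain) (f : R -> R -> R) : Prop := forall k, Ck k U f.

Definition vsmooth (U : domain) (X : R -> R -> R4) : Prop :=
  smooth U (fun u v => c1 (X u v)) /\ smooth U (fun u v => c2 (X u v)) /\
  smooth U (fun u v => c3 (X u v)) /\ smooth U (fun u v => c4 (X u v)).

Definition vpd_u (U : domain) (X Y : R -> R -> R4) : Prop :=
  pd_u U (fun u v => c1 (X u v)) (fun u v => c1 (Y u v)) /\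
  pd_u U (fun u v => c2 (X u v)) (fun u v => c2 (Y u v)) /\
  pd_u U (fun u v => c3 (X u v)) (fun u v => c3 (Y u v)) /\
  pd_u U (fun u v => c4 (X u v)) (fun u v => c4 (Y u v)).
Definition vpd_v (U : domain) (X Y : R -> R -> R4) : Prop :=
  pd_v U (fun u v => c1 (X u v)) (fun u v => c1 (Y u v)) /\
  pd_v U (fun u v => c2 (X u v)) (fun u v => c2 (Y u v)) /\
  pd_v U (fun u v => c3 (X u v)) (fun u v => c3 (Y u v)) /\
  pd_v U (fun u v => c4 (X u v)) (fun u v => c4 (Y u v)).

(* zu, zv are the partial derivatives of z; first fundamental form *)
Definition fE (zu : R -> R -> R4) u v := dot (zu u v) (zu u v).
Definition fF (zu zv : R -> R -> R4) u v := dot (zu u v) (zv u v).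
Definition fG (zv : R -> R -> R4) u v := dot (zv u v) (zv u v).

Definition regular_surface (U : domain) (z zu zv : R -> R -> R4) : Prop :=
  open_dom U /\ vsmooth U z /\ vpd_u U z zu /\ vpd_v U z zv /\
  forall u v, U u v -> fE zu u v * fG zv u v - fF zu zv u v ^ 2 > 0.

(* Flat connection along the surface in semi-canonical parameters:
   since x = z_u/sqrt E and y = z_v/sqrt G, for a field X along M,
   nabla'_x X = (1/sqrt E) d_u X and nabla'_y X = (1/sqrt G) d_v X.
   [nabla_x U zu X Y] says nabla'_x X = Y on U; similarly [nabla_y]. *)
Definition nabla_x (U : domain) (zu : R -> R -> R4) (X Y : R -> R -> R4) : Prop :=
  vpd_u U X (fun u v => vscale (sqrt (fE zu u v)) (Y u v)).
Definition nabla_y (U : domain) (zv : R -> R -> R4) (X Y : R -> R -> R4) : Prop :=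
  vpd_v U X (fun u v => vscale (sqrt (fG zv u v)) (Y u v)).

Definition semi_canonical (U : domain) (zu zv x y : R -> R -> R4) : Prop :=
  forall u v, U u v ->
    fF zu zv u v = 0 /\
    x u v = vscale (/ sqrt (fE zu u v)) (zu u v) /\
    y u v = vscale (/ sqrt (fG zv u v)) (zv u v).

Definition lc2 (a : R) (X : R4) (b : R) (Y : R4) : R4 := vadd (vscale a X) (vscale b Y).

(* Geometric frame {x,y,n1,n2} of a minimal surface of general type with
   invariants nu, mu, g1 (=gamma_1), g2 (=gamma_2), b1 (=beta_1), b2 (=beta_2). *)
Definition geometric_frame (U : domain) (zu zv x y n1 n2 : R -> R -> R4)
    (nu mu g1 g2 b1 b2 : R -> R -> R) : Prop :=
  vsmooth U n1 /\ vsmooth U n2 /\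
  smooth U nu /\ smooth U mu /\ smooth U g1 /\ smooth U g2 /\
  smooth U b1 /\ smooth U b2 /\
  (forall u v, U u v ->
     dot (x u v) (x u v) = 1 /\ dot (y u v) (y u v) = 1 /\
     dot (n1 u v) (n1 u v) = 1 /\ dot (n2 u v) (n2 u v) = 1 /\
     dot (x u v) (y u v) = 0 /\ dot (x u v) (n1 u v) = 0 /\
     dot (x u v) (n2 u v) = 0 /\ dot (y u v) (n1 u v) = 0 /\
     dot (y u v) (n2 u v) = 0 /\ dot (n1 u v) (n2 u v) = 0 /\
     det4 (x u v) (y u v) (n1 u v) (n2 u v) > 0 /\
     mu u v > 0 /\ nu u v <> 0 /\ mu u v ^ 2 <> nu u v ^ 2) /\
  nabla_x U zu x (fun u v => lc2 (g1 u v) (y u v) (nu u v) (n1 u v)) /\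
  nabla_x U zu y (fun u v => lc2 (- g1 u v) (x u v) (mu u v) (n2 u v)) /\
  nabla_y U zv x (fun u v => lc2 (- g2 u v) (y u v) (mu u v) (n2 u v)) /\
  nabla_y U zv y (fun u v => lc2 (g2 u v) (x u v) (- nu u v) (n1 u v)) /\
  nabla_x U zu n1 (fun u v => lc2 (- nu u v) (x u v) (b1 u v) (n2 u v)) /\
  nabla_y U zv n1 (fun u v => lc2 (nu u v) (y u v) (b2 u v) (n2 u v)) /\
  nabla_x U zu n2 (fun u v => lc2 (- mu u v) (y u v) (- b1 u v) (n1 u v)) /\
  nabla_y U zv n2 (fun u v => lc2 (- mu u v) (x u v) (- b2 u v) (n1 u v)).

Definition strongly_regular (U : domain) (g1 g2 : R -> R -> R) : Prop :=
  forall u v, U u v -> g1 u v * g2 u v <> 0.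

(* Main.v *)
Require Import Defs.
From Stdlib Require Import Reals Lra Psatz FunctionalExtensionality Classical.
Open Scope R_scope.

Lemma D_eqv f x l l' : derivable_pt_lim f x l -> l = l' -> derivable_pt_lim f x l'.
Proof. intros H ->; exact H. Qed.

Lemma D_mul f g x a b : derivable_pt_lim f x a -> derivable_pt_lim g x b ->
  derivable_pt_lim (fun t => f t * g t) x (a * g x + f x * b).
Proof. intros H1 H2. exact (derivable_pt_lim_mult f g x a b H1 H2). Qed.
Lemma D_plus f g x a b : derivable_pt_lim f x a -> derivable_pt_lim g x b ->
  derivable_pt_lim (fun t => f t + g t) x (a + b).
Proof. intros H1 H2. exact (derivable_pt_lim_plus f g x a b H1 H2). Qed.
Lemma D_minus f g x a b : derivable_pt_lim f x a -> derivable_pt_lim g x b ->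
  derivable_pt_lim (fun t => f t - g t) x (a - b).
Proof. intros H1 H2. exact (derivable_pt_lim_minus f g x a b H1 H2). Qed.
Lemma D_opp f x a : derivable_pt_lim f x a ->
  derivable_pt_lim (fun t => - f t) x (- a).
Proof. intros H1. exact (derivable_pt_lim_opp f x a H1). Qed.
Lemma D_const c x : derivable_pt_lim (fun _ => c) x 0.
Proof. exact (derivable_pt_lim_const c x). Qed.
Lemma D_sqrt f x a : derivable_pt_lim f x a -> 0 < f x ->
  derivable_pt_lim (fun t => sqrt (f t)) x (a / (2 * sqrt (f x))).
Proof.
  intros H Hp. apply D_eqv with (/ (2 * sqrt (f x)) * a).
  - exact (derivable_pt_lim_comp f sqrt x a _ H (derivable_pt_lim_sqrt _ Hp)).
  - unfold Rdiv; ring.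
Qed.
Lemma D_sq f x d : derivable_pt_lim f x d ->
  derivable_pt_lim (fun t => f t ^ 2) x (2 * f x * d).
Proof.
  intros H. replace (fun t => f t ^ 2) with (fun t => f t * f t)
    by (apply functional_extensionality; intro; ring).
  eapply D_eqv. apply D_mul; eauto. ring.
Qed.

Lemma D_loc f g x l r : r > 0 -> (forall t, Rabs (t - x) < r -> f t = g t) ->
  derivable_pt_lim f x l -> derivable_pt_lim g x l.
Proof.
  intros Hr Heq H eps Heps. destruct (H eps Heps) as [d Hd].
  assert (Hm : 0 < Rmin d r) by (apply Rmin_pos; [apply cond_pos|lra]).
  exists (mkposreal _ Hm). intros h Hh Hhd. simpl in Hhd.
  rewrite <- !Heq.
  - apply Hd; auto. apply Rlt_le_trans with (1 := Hhd). apply Rmin_l.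
  - unfold Rminus. rewrite Rplus_opp_r, Rabs_R0. lra.
  - replace (x + h - x) with h by ring. apply Rlt_le_trans with (1 := Hhd). apply Rmin_r.
Qed.

Lemma D_sqrtabs f x d : derivable_pt_lim f x d -> f x <> 0 ->
  derivable_pt_lim (fun t => sqrt (Rabs (f t))) x (d / (2 * f x) * sqrt (Rabs (f x))).
Proof.
  intros H Hn.
  replace (fun t => sqrt (Rabs (f t))) with (fun t => sqrt (sqrt (f t * f t))).
  2:{ apply functional_extensionality; intro t. rewrite <- sqrt_Rsqr_abs. reflexivity. }
  assert (Hp : 0 < f x * f x) by (apply Rsqr_pos_lt in Hn; exact Hn).
  assert (Hq : sqrt (f x * f x) = Rabs (f x)) by (rewrite <- sqrt_Rsqr_abs; reflexivity).
  assert (Hq0 : 0 < sqrt (f x * f x)) by (apply sqrt_lt_R0; exact Hp).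
  eapply D_eqv.
  - apply D_sqrt; [apply D_sqrt; [apply D_mul; exact H|exact Hp]|exact Hq0].
  - cbv beta. rewrite Hq. rewrite Hq in Hq0.
    assert (HS : 0 < sqrt (Rabs (f x))) by (apply sqrt_lt_R0; exact Hq0).
    assert (HSS : sqrt (Rabs (f x)) * sqrt (Rabs (f x)) = Rabs (f x)) by (apply sqrt_sqrt; lra).
    set (S := sqrt (Rabs (f x))) in *.
    destruct (Rcase_abs (f x)) as [Hl|Hl].
    + rewrite Rabs_left in HSS by lra. field_simplify; [|lra|lra].
      rewrite Rabs_left by lra. 
      replace (f x) with (- (S * S)) by lra. field. lra.
    + rewrite Rabs_right in HSS by lra. rewrite Rabs_right by lra.
      replace (f x) with (S * S) by lra. field. lra.
Qed.

Definition cont_at (f : R -> R -> R) u v := forall eps, eps > 0 -> exists delta, delta > 0 /\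
      forall u' v', Rabs (u' - u) < delta -> Rabs (v' - v) < delta ->
      Rabs (f u' v' - f u v) < eps.

Lemma schwarz (f fu fv fuv fvu : R -> R -> R) u v r : r > 0 ->
  (forall s t, Rabs (s - u) < r -> Rabs (t - v) < r ->
     derivable_pt_lim (fun s' => f s' t) s (fu s t) /\
     derivable_pt_lim (fun t' => f s t') t (fv s t) /\
     derivable_pt_lim (fun t' => fu s t') t (fuv s t) /\
     derivable_pt_lim (fun s' => fv s' t) s (fvu s t)) ->
  cont_at fuv u v -> cont_at fvu u v -> fuv u v = fvu u v.
Proof.
  intros Hr HD C1 C2.
  apply NNPP; intro Hne.
  set (e := Rabs (fuv u v - fvu u v) / 2).
  assert (He : e > 0) by (unfold e; assert (fuv u v - fvu u v <> 0) by (intro; apply Hne; lra); pose proof (Rabs_pos_lt _ H); lra).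
  destruct (C1 e He) as [d1 [Hd1 P1]]. destruct (C2 e He) as [d2 [Hd2 P2]].
  set (h := Rmin (Rmin d1 d2) r / 2).
  assert (Hm : 0 < Rmin (Rmin d1 d2) r) by (repeat apply Rmin_pos; lra).
  assert (Hh0 : 0 < h) by (unfold h; lra).
  assert (Hh1 : h < d1) by (unfold h; pose proof (Rmin_l (Rmin d1 d2) r); pose proof (Rmin_l d1 d2); lra).
  assert (Hh2 : h < d2) by (unfold h; pose proof (Rmin_l (Rmin d1 d2) r); pose proof (Rmin_r d1 d2); lra).
  assert (Hh3 : h < r) by (unfold h; pose proof (Rmin_r (Rmin d1 d2) r); lra).
  assert (Hin : forall s, u <= s <= u + h -> Rabs (s - u) < r)
    by (intros s Hs; rewrite Rabs_right; lra).
  assert (Hin' : forall t, v <= t <= v + h -> Rabs (t - v) < r)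
    by (intros t Ht; rewrite Rabs_right; lra).
  assert (Hv : Rabs (v - v) < r) by (rewrite Rminus_diag, Rabs_R0; lra).
  assert (Hu : Rabs (u - u) < r) by (rewrite Rminus_diag, Rabs_R0; lra).
  assert (Hvh : v <= v + h <= v + h) by lra.
  assert (Huh : u <= u + h <= u + h) by lra.
  destruct (MVT_cor2 (fun s => f s (v + h) - f s v) (fun s => fu s (v + h) - fu s v) u (u + h))
    as [xi [Exi Hxi]]; [lra| |].
  { intros c Hc. apply D_minus; apply (HD c); auto; apply Hin'; lra. }
  destruct (MVT_cor2 (fun t => fu xi t) (fun t => fuv xi t) v (v + h))
    as [eta [Eeta Heta]]; [lra| |].
  { intros c Hc. apply (HD xi c); auto. apply Hin; lra. }
  destruct (MVT_cor2 (fun t => f (u + h) t - f u t) (fun t => fv (u + h) t - fv u t) v (v + h))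
    as [eta' [Eeta' Heta']]; [lra| |].
  { intros c Hc. apply D_minus; apply (HD _ c); auto. }
  destruct (MVT_cor2 (fun s => fv s eta') (fun s => fvu s eta') u (u + h))
    as [xi' [Exi' Hxi']]; [lra| |].
  { intros c Hc. apply (HD c eta'); auto; apply Hin'; lra. }
  simpl in *.
  assert (Heq : fuv xi eta = fvu xi' eta').
  { apply Rmult_eq_reg_r with (h * h); [|nra].
    assert (K1 : fuv xi eta * h = fu xi (v + h) - fu xi v) by (rewrite Eeta; ring).
    assert (K2 : fvu xi' eta' * h = fv (u + h) eta' - fv u eta') by (rewrite Exi'; ring).
    replace (fuv xi eta * (h * h)) with ((fu xi (v + h) - fu xi v) * h) by (rewrite <- K1; ring).
    replace (fvu xi' eta' * (h * h)) with ((fv (u + h) eta' - fv u eta') * h) by (rewrite <- K2; ring).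
    replace ((fu xi (v + h) - fu xi v) * h) with ((fu xi (v + h) - fu xi v) * (u + h - u)) by ring.
    replace ((fv (u + h) eta' - fv u eta') * h) with ((fv (u + h) eta' - fv u eta') * (v + h - v)) by ring.
    rewrite <- Exi, <- Eeta'. ring. }
  assert (A1 : Rabs (fuv xi eta - fuv u v) < e) by (apply P1; rewrite Rabs_right; lra).
  assert (A2 : Rabs (fvu xi' eta' - fvu u v) < e) by (apply P2; rewrite Rabs_right; lra).
  rewrite Heq in A1.
  assert (Rabs (fuv u v - fvu u v) < 2 * e).
  { replace (fuv u v - fvu u v) with (-(fvu xi' eta' - fuv u v) + (fvu xi' eta' - fvu u v)) by ring.
    eapply Rle_lt_trans. apply Rabs_triang. rewrite Rabs_Ropp. lra. }
  unfold e in H. lra.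
Qed.

Lemma pd_u_uniq U f A A' s t : pd_u U f A -> pd_u U f A' -> U s t -> A s t = A' s t.
Proof. intros H1 H2 Hs. eapply uniqueness_limite; [apply H1|apply H2]; exact Hs. Qed.
Lemma pd_v_uniq U f A A' s t : pd_v U f A -> pd_v U f A' -> U s t -> A s t = A' s t.
Proof. intros H1 H2 Hs. eapply uniqueness_limite; [apply H1|apply H2]; exact Hs. Qed.

Lemma Rabs_00 r : r > 0 -> forall a, Rabs (a - a) < r.
Proof. intros. rewrite Rminus_diag, Rabs_R0; lra. Qed.

Lemma ex_mixed_v U f A u v : open_dom U -> Ck 2 U f -> pd_u U f A -> U u v ->
  exists d, derivable_pt_lim (fun t => A u t) v d.
Proof.
  intros Ho Hc HA Huv. simpl in Hc.
  destruct Hc as (fu & fv & H1 & H2 & (fuu & fuv & H3 & H4 & _ & _) & _).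
  destruct (Ho u v Huv) as [r [Hr Hsq]].
  exists (fuv u v). apply D_loc with (f := fun t => fu u t) (r := r); auto.
  intros t Ht. symmetry. apply (pd_u_uniq U f); auto. apply Hsq; auto. apply Rabs_00; lra.
Qed.

Lemma ex_mixed_u U f B u v : open_dom U -> Ck 2 U f -> pd_v U f B -> U u v ->
  exists d, derivable_pt_lim (fun s => B s v) u d.
Proof.
  intros Ho Hc HB Huv. simpl in Hc.
  destruct Hc as (fu & fv & H1 & H2 & _ & (fvu & fvv & H3 & H4 & _ & _)).
  destruct (Ho u v Huv) as [r [Hr Hsq]].
  exists (fvu u v). apply D_loc with (f := fun s => fv s v) (r := r); auto.
  intros s Hs. symmetry. apply (pd_v_uniq U f); auto. apply Hsq; auto. apply Rabs_00; lra.
Qed.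

Lemma ex_dv U f u v : Ck 1 U f -> U u v -> exists d, derivable_pt_lim (fun t => f u t) v d.
Proof. intros Hc Huv. destruct Hc as (fu & fv & H1 & H2 & _). exists (fv u v). apply H2; auto. Qed.
Lemma ex_du U f u v : Ck 1 U f -> U u v -> exists d, derivable_pt_lim (fun s => f s v) u d.
Proof. intros Hc Huv. destruct Hc as (fu & fv & H1 & H2 & _). exists (fu u v). apply H1; auto. Qed.

Lemma smooth_mixed U f A B u v a b : open_dom U -> Ck 2 U f -> pd_u U f A -> pd_v U f B -> U u v ->
  derivable_pt_lim (fun t => A u t) v a -> derivable_pt_lim (fun s => B s v) u b -> a = b.
Proof.
  intros Ho Hc HA HB Huv Ha Hb. simpl in Hc.
  destruct Hc as (fu & fv & H1 & H2 & (fuu & fuv & H3 & H4 & _ & C1) & (fvu & fvv & H5 & H6 & C2 & _)).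
  destruct (Ho u v Huv) as [r [Hr Hsq]].
  assert (Ea : a = fuv u v).
  { apply (uniqueness_limite (fun t => fu u t) v); [|apply H4; auto].
    apply D_loc with (f := fun t => A u t) (r := r); auto.
    intros t Ht. apply (pd_u_uniq U f); auto. apply Hsq; auto. apply Rabs_00; lra. }
  assert (Eb : b = fvu u v).
  { apply (uniqueness_limite (fun s => fv s v) u); [|apply H5; auto].
    apply D_loc with (f := fun s => B s v) (r := r); auto.
    intros s Hs. apply (pd_v_uniq U f); auto. apply Hsq; auto. apply Rabs_00; lra. }
  rewrite Ea, Eb.
  apply (schwarz f fu fv fuv fvu u v r Hr).
  - intros s t Hs Ht. assert (U s t) by auto. repeat split; [apply H1|apply H2|apply H4|apply H5]; auto.
  - intros eps He. apply C1; auto.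
  - intros eps He. apply C2; auto.
Qed.

Definition isproj (pi : R4 -> R) := pi = Defs.c1 \/ pi = Defs.c2 \/ pi = Defs.c3 \/ pi = Defs.c4.

Lemma pi_scale pi r X : isproj pi -> pi (vscale r X) = r * pi X.
Proof. intros [ -> | [ -> | [ -> | -> ]]]; reflexivity. Qed.
Lemma pi_nab pi s a X b Y : isproj pi -> pi (vscale s (lc2 a X b Y)) = s * (a * pi X + b * pi Y).
Proof. intros [ -> | [ -> | [ -> | -> ]]]; reflexivity. Qed.

Lemma vpd_u_pi U X Y pi : vpd_u U X Y -> isproj pi ->
  pd_u U (fun s t => pi (X s t)) (fun s t => pi (Y s t)).
Proof. intros (H1&H2&H3&H4) [ -> | [ -> | [ -> | -> ]]]; assumption. Qed.
Lemma vpd_v_pi U X Y pi : vpd_v U X Y -> isproj pi ->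
  pd_v U (fun s t => pi (X s t)) (fun s t => pi (Y s t)).
Proof. intros (H1&H2&H3&H4) [ -> | [ -> | [ -> | -> ]]]; assumption. Qed.
Lemma vsmooth_pi U X pi : vsmooth U X -> isproj pi -> smooth U (fun s t => pi (X s t)).
Proof. intros (H1&H2&H3&H4) [ -> | [ -> | [ -> | -> ]]]; assumption. Qed.

Lemma nabla_x_pd U zu X c P d Q pi :
  nabla_x U zu X (fun s t => lc2 (c s t) (P s t) (d s t) (Q s t)) -> isproj pi ->
  pd_u U (fun s t => pi (X s t))
    (fun s t => sqrt (fE zu s t) * (c s t * pi (P s t) + d s t * pi (Q s t))).
Proof.
  intros H Hp. pose proof (vpd_u_pi _ _ _ _ H Hp) as H'.
  intros s t Hst. specialize (H' s t Hst). cbv beta in H'. rewrite pi_nab in H'; auto.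
Qed.
Lemma nabla_y_pd U zv X c P d Q pi :
  nabla_y U zv X (fun s t => lc2 (c s t) (P s t) (d s t) (Q s t)) -> isproj pi ->
  pd_v U (fun s t => pi (X s t))
    (fun s t => sqrt (fG zv s t) * (c s t * pi (P s t) + d s t * pi (Q s t))).
Proof.
  intros H Hp. pose proof (vpd_v_pi _ _ _ _ H Hp) as H'.
  intros s t Hst. specialize (H' s t Hst). cbv beta in H'. rewrite pi_nab in H'; auto.
Qed.

Lemma dot_nonneg X : 0 <= dot X X.
Proof. unfold dot. nra. Qed.

Lemma extract (X Y Z W : R4) cx cy cz cw :
  dot X X = 1 -> dot Y Y = 1 -> dot X Y = 0 -> dot X Z = 0 -> dot X W = 0 ->
  dot Y Z = 0 -> dot Y W = 0 ->
  (forall pi, isproj pi -> cx * pi X + cy * pi Y + cz * pi Z + cw * pi W = 0) ->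
  cx = 0 /\ cy = 0.
Proof.
  intros H1 H2 H3 H4 H5 H6 H7 H.
  pose proof (H Defs.c1 ltac:(left; reflexivity)) as e1.
  pose proof (H Defs.c2 ltac:(right; left; reflexivity)) as e2.
  pose proof (H Defs.c3 ltac:(right; right; left; reflexivity)) as e3.
  pose proof (H Defs.c4 ltac:(right; right; right; reflexivity)) as e4.
  split.
  - assert (cx * dot X X + cy * dot X Y + cz * dot X Z + cw * dot X W =
      Defs.c1 X * (cx * Defs.c1 X + cy * Defs.c1 Y + cz * Defs.c1 Z + cw * Defs.c1 W) +
      Defs.c2 X * (cx * Defs.c2 X + cy * Defs.c2 Y + cz * Defs.c2 Z + cw * Defs.c2 W) +
      Defs.c3 X * (cx * Defs.c3 X + cy * Defs.c3 Y + cz * Defs.c3 Z + cw * Defs.c3 W) +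
      Defs.c4 X * (cx * Defs.c4 X + cy * Defs.c4 Y + cz * Defs.c4 Z + cw * Defs.c4 W)) as K by (unfold dot; ring).
    rewrite e1, e2, e3, e4, H1, H3, H4, H5 in K. lra.
  - assert (cx * dot X Y + cy * dot Y Y + cz * dot Y Z + cw * dot Y W =
      Defs.c1 Y * (cx * Defs.c1 X + cy * Defs.c1 Y + cz * Defs.c1 Z + cw * Defs.c1 W) +
      Defs.c2 Y * (cx * Defs.c2 X + cy * Defs.c2 Y + cz * Defs.c2 Z + cw * Defs.c2 W) +
      Defs.c3 Y * (cx * Defs.c3 X + cy * Defs.c3 Y + cz * Defs.c3 Z + cw * Defs.c3 W) +
      Defs.c4 Y * (cx * Defs.c4 X + cy * Defs.c4 Y + cz * Defs.c4 Z + cw * Defs.c4 W)) as K by (unfold dot; ring).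
    rewrite e1, e2, e3, e4, H2, H3, H6, H7 in K. lra.
Qed.

Lemma ex_dot (X : R -> R4) x :
  (forall pi, isproj pi -> exists d, derivable_pt_lim (fun t => pi (X t)) x d) ->
  exists d, derivable_pt_lim (fun t => dot (X t) (X t)) x d.
Proof.
  intros H.
  destruct (H Defs.c1 ltac:(left; reflexivity)) as [d1 e1].
  destruct (H Defs.c2 ltac:(right; left; reflexivity)) as [d2 e2].
  destruct (H Defs.c3 ltac:(right; right; left; reflexivity)) as [d3 e3].
  destruct (H Defs.c4 ltac:(right; right; right; reflexivity)) as [d4 e4].
  eexists. unfold dot.
  repeat apply D_plus; apply D_mul; eauto.
Qed.


Theorem lemma6p1 (U : domain) (z zu zv x y n1 n2 : R -> R -> R4)
    (nu mu g1 g2 b1 b2 : R -> R -> R) :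
  regular_surface U z zu zv ->
  semi_canonical U zu zv x y ->
  geometric_frame U zu zv x y n1 n2 nu mu g1 g2 b1 b2 ->
  strongly_regular U g1 g2 ->
  forall u v, U u v ->
    derivable_pt_lim
      (fun t => fE zu u t * sqrt (Rabs (mu u t ^ 2 - nu u t ^ 2))) v 0 /\
    derivable_pt_lim
      (fun s => fG zv s v * sqrt (Rabs (mu s v ^ 2 - nu s v ^ 2))) u 0.
Proof.
  intros Hreg Hsc Hgf Hsr u v Huv.
  destruct Hreg as (Ho & Hzs & Hzu & Hzv & Hpos).
  destruct Hgf as (Hn1s & Hn2s & Hnus & Hmus & Hg1s & Hg2s & Hb1s & Hb2s & Hfr &
     Nxu & Nyu & Nxv & Nyv & Nn1u & Nn1v & Nn2u & Nn2v).
  assert (EGpos : forall s t, U s t -> 0 < fE zu s t /\ 0 < fG zv s t).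
  { intros s t Hst. specialize (Hpos s t Hst). destruct (Hsc s t Hst) as (HF & _ & _).
    rewrite HF in Hpos. pose proof (dot_nonneg (zu s t)). pose proof (dot_nonneg (zv s t)).
    unfold fE, fG in *. split; nra. }
  assert (Zux : forall pi, isproj pi -> forall s t, U s t -> pi (zu s t) = sqrt (fE zu s t) * pi (x s t)).
  { intros pi Hp s t Hst. destruct (Hsc s t Hst) as (_ & Hx & _). rewrite Hx, pi_scale by auto.
    destruct (EGpos s t Hst) as [HE _]. pose proof (sqrt_lt_R0 _ HE). field. lra. }
  assert (Zvy : forall pi, isproj pi -> forall s t, U s t -> pi (zv s t) = sqrt (fG zv s t) * pi (y s t)).
  { intros pi Hp s t Hst. destruct (Hsc s t Hst) as (_ & _ & Hy). rewrite Hy, pi_scale by auto.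
    destruct (EGpos s t Hst) as [_ HG]. pose proof (sqrt_lt_R0 _ HG). field. lra. }
  destruct (Hfr u v Huv) as (dxx & dyy & dn1 & dn2 & dxy & dxn1 & dxn2 & dyn1 & dyn2 & dn12 & _ & Hmu & Hnu & Hmn).
  destruct (EGpos u v Huv) as [HE HG].
  assert (Ha : 0 < sqrt (fE zu u v)) by (apply sqrt_lt_R0; auto).
  assert (Hb : 0 < sqrt (fG zv u v)) by (apply sqrt_lt_R0; auto).
  destruct (Ho u v Huv) as [r [Hr Hsq]].
  assert (exE : exists d, derivable_pt_lim (fun t => fE zu u t) v d).
  { unfold fE. apply (ex_dot (fun t => zu u t)). intros pi Hp.
    apply (ex_mixed_v U (fun s t => pi (z s t)) (fun s t => pi (zu s t))); auto.
    apply (vsmooth_pi _ _ _ Hzs Hp). apply (vpd_u_pi _ _ _ _ Hzu Hp). }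
  destruct exE as [Ev HEv].
  pose proof (D_sqrt _ _ _ HEv HE) as Hav. cbv beta in Hav.
  remember (Ev / (2 * sqrt (fE zu u v))) as av eqn:Hav_def.
  assert (exG : exists d, derivable_pt_lim (fun s => fG zv s v) u d).
  { unfold fG. apply (ex_dot (fun s => zv s v)). intros pi Hp.
    apply (ex_mixed_u U (fun s t => pi (z s t)) (fun s t => pi (zv s t))); auto.
    apply (vsmooth_pi _ _ _ Hzs Hp). apply (vpd_v_pi _ _ _ _ Hzv Hp). }
  destruct exG as [Gu HGu].
  pose proof (D_sqrt _ _ _ HGu HG) as Hbu. cbv beta in Hbu.
  remember (Gu / (2 * sqrt (fG zv u v))) as bu eqn:Hbu_def.
  destruct (ex_dv U nu u v (Hnus 1%nat) Huv) as [Nv HNv].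
  destruct (ex_dv U mu u v (Hmus 1%nat) Huv) as [Mv HMv].
  destruct (ex_dv U b1 u v (Hb1s 1%nat) Huv) as [B1v HB1v].
  destruct (ex_du U nu u v (Hnus 1%nat) Huv) as [Nu HNu].
  destruct (ex_du U mu u v (Hmus 1%nat) Huv) as [Mu HMu].
  destruct (ex_du U b2 u v (Hb2s 1%nat) Huv) as [B2u HB2u].
  assert (EZ : forall pi, isproj pi -> (av - (sqrt (fG zv u v))*(sqrt (fE zu u v))*(-g1 u v)) * pi (x u v) + ((sqrt (fE zu u v))*(sqrt (fG zv u v))*(-g2 u v) - bu) * pi (y u v) + (0) * pi (n1 u v) + ((sqrt (fE zu u v))*(sqrt (fG zv u v))*mu u v - (sqrt (fG zv u v))*(sqrt (fE zu u v))*mu u v) * pi (n2 u v) = 0).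
  { intros pi Hp.
    pose proof (nabla_y_pd _ _ _ (fun s t => - g2 s t) y mu n2 pi Nxv Hp) as PXv.
    pose proof (nabla_x_pd _ _ _ (fun s t => - g1 s t) x mu n2 pi Nyu Hp) as PYu.
    pose proof (D_mul _ _ _ _ _ Hav (PXv u v Huv)) as DA0.
    pose proof (D_mul _ _ _ _ _ Hbu (PYu u v Huv)) as DB0.
    assert (DA := D_loc _ (fun t => pi (zu u t)) v _ r Hr
      ltac:(intros t Ht; symmetry; apply Zux; auto; apply Hsq; auto; apply Rabs_00; lra) DA0).
    assert (DB := D_loc _ (fun s => pi (zv s v)) u _ r Hr
      ltac:(intros s Hs; symmetry; apply Zvy; auto; apply Hsq; auto; apply Rabs_00; lra) DB0).
    pose proof (smooth_mixed U (fun s t => pi (z s t)) (fun s t => pi (zu s t)) (fun s t => pi (zv s t)) u v _ _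
      Ho (vsmooth_pi _ _ _ Hzs Hp 2%nat) (vpd_u_pi _ _ _ _ Hzu Hp) (vpd_v_pi _ _ _ _ Hzv Hp) Huv DA DB) as E.
    cbv beta in E. lra. }
  assert (EN1 : forall pi, isproj pi -> (av*(-nu u v) + (sqrt (fE zu u v))*(-Nv) + (sqrt (fE zu u v))*b1 u v*(sqrt (fG zv u v))*(-mu u v) - ((sqrt (fG zv u v))*nu u v*(sqrt (fE zu u v))*(-g1 u v))) * pi (x u v) + ((sqrt (fE zu u v))*(-nu u v)*(sqrt (fG zv u v))*(-g2 u v) - (bu*nu u v + (sqrt (fG zv u v))*Nu + (sqrt (fG zv u v))*b2 u v*(sqrt (fE zu u v))*(-mu u v))) * pi (y u v) + ((sqrt (fE zu u v))*b1 u v*(sqrt (fG zv u v))*(-b2 u v) - (sqrt (fG zv u v))*b2 u v*(sqrt (fE zu u v))*(-b1 u v)) * pi (n1 u v) + (av*b1 u v + (sqrt (fE zu u v))*(-nu u v)*(sqrt (fG zv u v))*mu u v + (sqrt (fE zu u v))*B1v - (bu*b2 u v + (sqrt (fG zv u v))*nu u v*(sqrt (fE zu u v))*mu u v + (sqrt (fG zv u v))*B2u)) * pi (n2 u v) = 0).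
  { intros pi Hp.
    pose proof (nabla_y_pd _ _ _ (fun s t => - g2 s t) y mu n2 pi Nxv Hp) as PXv.
    pose proof (nabla_x_pd _ _ _ (fun s t => - g1 s t) x mu n2 pi Nyu Hp) as PYu.
    pose proof (nabla_y_pd _ _ _ (fun s t => - mu s t) x (fun s t => - b2 s t) n1 pi Nn2v Hp) as PN2v.
    pose proof (nabla_x_pd _ _ _ (fun s t => - mu s t) y (fun s t => - b1 s t) n1 pi Nn2u Hp) as PN2u.
    pose proof (nabla_x_pd _ _ _ (fun s t => - nu s t) x b1 n2 pi Nn1u Hp) as PN1u.
    pose proof (nabla_y_pd _ _ _ nu y b2 n2 pi Nn1v Hp) as PN1v.
    pose proof (D_mul _ _ _ _ _ Hav (D_plus _ _ _ _ _ (D_mul _ _ _ _ _ (D_opp _ _ _ HNv) (PXv u v Huv))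
         (D_mul _ _ _ _ _ HB1v (PN2v u v Huv)))) as DA.
    pose proof (D_mul _ _ _ _ _ Hbu (D_plus _ _ _ _ _ (D_mul _ _ _ _ _ HNu (PYu u v Huv))
         (D_mul _ _ _ _ _ HB2u (PN2u u v Huv)))) as DB.
    pose proof (smooth_mixed U (fun s t => pi (n1 s t)) _ _ u v _ _
      Ho (vsmooth_pi _ _ _ Hn1s Hp 2%nat) PN1u PN1v Huv DA DB) as E.
    cbv beta in E. lra. }
  assert (EN2 : forall pi, isproj pi -> ((sqrt (fE zu u v))*(-mu u v)*(sqrt (fG zv u v))*g2 u v - (-bu*mu u v - (sqrt (fG zv u v))*Mu + (sqrt (fG zv u v))*(-b2 u v)*(sqrt (fE zu u v))*(-nu u v))) * pi (x u v) + (-av*mu u v - (sqrt (fE zu u v))*Mv + (sqrt (fE zu u v))*(-b1 u v)*(sqrt (fG zv u v))*nu u v - ((sqrt (fG zv u v))*(-mu u v)*(sqrt (fE zu u v))*g1 u v)) * pi (y u v) + (-av*b1 u v + (sqrt (fE zu u v))*(-mu u v)*(sqrt (fG zv u v))*(-nu u v) - (sqrt (fE zu u v))*B1v - (-bu*b2 u v + (sqrt (fG zv u v))*(-mu u v)*(sqrt (fE zu u v))*nu u v - (sqrt (fG zv u v))*B2u)) * pi (n1 u v) + ((sqrt (fE zu u v))*(-b1 u v)*(sqrt (fG zv u v))*b2 u v - (sqrt (fG zv u v))*(-b2 u v)*(sqrt (fE zu u v))*b1 u v) * pi (n2 u v) = 0).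
  { intros pi Hp.
    pose proof (nabla_y_pd _ _ _ g2 x (fun s t => - nu s t) n1 pi Nyv Hp) as PYv.
    pose proof (nabla_x_pd _ _ _ g1 y nu n1 pi Nxu Hp) as PXu.
    pose proof (nabla_y_pd _ _ _ nu y b2 n2 pi Nn1v Hp) as PN1v.
    pose proof (nabla_x_pd _ _ _ (fun s t => - nu s t) x b1 n2 pi Nn1u Hp) as PN1u.
    pose proof (nabla_x_pd _ _ _ (fun s t => - mu s t) y (fun s t => - b1 s t) n1 pi Nn2u Hp) as PN2u.
    pose proof (nabla_y_pd _ _ _ (fun s t => - mu s t) x (fun s t => - b2 s t) n1 pi Nn2v Hp) as PN2v.
    pose proof (D_mul _ _ _ _ _ Hav (D_plus _ _ _ _ _ (D_mul _ _ _ _ _ (D_opp _ _ _ HMv) (PYv u v Huv))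
         (D_mul _ _ _ _ _ (D_opp _ _ _ HB1v) (PN1v u v Huv)))) as DA.
    pose proof (D_mul _ _ _ _ _ Hbu (D_plus _ _ _ _ _ (D_mul _ _ _ _ _ (D_opp _ _ _ HMu) (PXu u v Huv))
         (D_mul _ _ _ _ _ (D_opp _ _ _ HB2u) (PN1u u v Huv)))) as DB.
    pose proof (smooth_mixed U (fun s t => pi (n2 s t)) _ _ u v _ _
      Ho (vsmooth_pi _ _ _ Hn2s Hp 2%nat) PN2u PN2v Huv DA DB) as E.
    cbv beta in E. lra. }
  destruct (extract _ _ _ _ _ _ _ _ dxx dyy dxy dxn1 dxn2 dyn1 dyn2 EZ) as [Z1 Z2].
  destruct (extract _ _ _ _ _ _ _ _ dxx dyy dxy dxn1 dxn2 dyn1 dyn2 EN1) as [P1 P2].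
  destruct (extract _ _ _ _ _ _ _ _ dxx dyy dxy dxn1 dxn2 dyn1 dyn2 EN2) as [Q1 Q2].
  assert (Hfe : sqrt (fE zu u v) * sqrt (fE zu u v) = fE zu u v) by (apply sqrt_sqrt; apply dot_nonneg).
  assert (Hfg : sqrt (fG zv u v) * sqrt (fG zv u v) = fG zv u v) by (apply sqrt_sqrt; apply dot_nonneg).
  assert (HD : mu u v ^ 2 - nu u v ^ 2 <> 0) by (intro; apply Hmn; lra).
  split.
  - eapply D_eqv.
    + apply D_mul. exact HEv. apply D_sqrtabs; [apply D_minus; apply D_sq; [exact HMv|exact HNv] | exact HD].
    + cbv beta.
      remember (sqrt (fE zu u v)) as a. remember (sqrt (fG zv u v)) as b.
      rewrite <- Hfe.
      assert (HEv' : Ev = 2 * a * av) by (rewrite Hav_def; field; lra).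
      assert (H1 : av = - (a * b * g1 u v)) by lra.
      rewrite H1 in P1, Q2.
      assert (HN : Nv = b * (2 * g1 u v * nu u v - b1 u v * mu u v))
        by (apply Rmult_eq_reg_l with a; lra).
      assert (HM : Mv = b * (2 * g1 u v * mu u v - b1 u v * nu u v))
        by (apply Rmult_eq_reg_l with a; lra).
      rewrite HEv', H1, HN, HM. field. exact HD.
  - eapply D_eqv.
    + apply D_mul. exact HGu. apply D_sqrtabs; [apply D_minus; apply D_sq; [exact HMu|exact HNu] | exact HD].
    + cbv beta.
      remember (sqrt (fE zu u v)) as a. remember (sqrt (fG zv u v)) as b.
      rewrite <- Hfg.
      assert (HGu' : Gu = 2 * b * bu) by (rewrite Hbu_def; field; lra).
      assert (H1 : bu = - (a * b * g2 u v)) by lra.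
      rewrite H1 in P2, Q1.
      assert (HN : Nu = a * (2 * g2 u v * nu u v + b2 u v * mu u v))
        by (apply Rmult_eq_reg_l with b; lra).
      assert (HM : Mu = a * (2 * g2 u v * mu u v + b2 u v * nu u v))
        by (apply Rmult_eq_reg_l with b; lra).
      rewrite HGu', H1, HN, HM. field. exact HD.
Qed.
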